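(* Let $m,n\in\mathbb N$ with $m\ge 5$, $n\ge 4$ and $m-1\mid (n-3)$, and let $i\in\{1,2\}$. Then $r(T_m^i,T_n')=m+n-3$.
   Context: All graphs are finite and simple; a graph ''contains'' $H$ if it has a subgraph isomorphic to $H$. For graphs $G_1,G_2$, the Ramsey number $r(G_1,G_2)$ is the smallest positive integer $N$ such that for every graph $G$ on $N$ vertices, either $G$ contains a copy of $G_1$ or the complement $\overline G$ contains a copy of $G_2$. For $m\ge 5$, $T_m^1$ is the tree with vertex set $\{v_0,\ldots,v_{m-1}\}$ and edges $v_0v_1,\ldots,v_0v_{m-3},v_{m-4}v_{m-2},v_{m-3}v_{m-1}$, and $T_m^2$ is the tree on the same vertex set with edges $v_0v_1,\ldots,v_0v_{m-3},v_{m-3}v_{m-2},v_{m-3}v_{m-1}$. For $n\ge 4$, $T_n'$ is the unique (up to isomorphism) tree on $n$ vertices with maximum degree $n-2$. *)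

(* Defs.v *)
From mathcomp Require Import all_boot.
Set Implicit Arguments. Unset Strict Implicit. Unset Printing Implicit Defensive.

Definition simple_graph (V : finType) (G : rel V) : Prop :=
  symmetric G /\ irreflexive G.

Definition compl_graph (V : finType) (G : rel V) : rel V :=
  fun x y => (x != y) && ~~ G x y.

Definition contains (V W : finType) (G : rel V) (H : rel W) : Prop :=
  exists f : W -> V, injective f /\ forall x y, H x y -> G (f x) (f y).

Definition ramsey_prop (V1 V2 : finType) (G1 : rel V1) (G2 : rel V2) (N : nat) : Prop :=
  forall G : rel 'I_N, simple_graph G -> contains G G1 \/ contains (compl_graph G) G2.

Definition is_ramsey_number (V1 V2 : finType) (G1 : rel V1) (G2 : rel V2) (r : nat) : Prop :=
  [/\ 0 < r, ramsey_prop G1 G2 r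
    & forall N, 0 < N -> N < r -> ~ ramsey_prop G1 G2 N].

Definition graph_of_edges (k : nat) (E : nat -> nat -> bool) : rel 'I_k :=
  fun x y => E x y || E y x.
Arguments graph_of_edges : clear implicits.

Definition T1 (m : nat) : rel 'I_m :=
  graph_of_edges m (fun a b =>
    [|| (a == 0) && (1 <= b <= m - 3),
        (a == m - 4) && (b == m - 2)
      | (a == m - 3) && (b == m - 1)]).

Definition T2 (m : nat) : rel 'I_m :=
  graph_of_edges m (fun a b =>
    [|| (a == 0) && (1 <= b <= m - 3),
        (a == m - 3) && (b == m - 2)
      | (a == m - 3) && (b == m - 1)]).

(* T_n' : the tree on n vertices with maximum degree n-2 (unique up to
   isomorphism): edges v0v1,...,v0v_{n-2}, v_{n-2}v_{n-1}. *)
Definition Tprime (n : nat) : rel 'I_n :=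
  graph_of_edges n (fun a b =>
    ((a == 0) && (1 <= b <= n - 2)) || ((a == n - 2) && (b == n - 1))).
Arguments T1 : clear implicits.
Arguments T2 : clear implicits.
Arguments Tprime : clear implicits.

(* Main.v *)
Require Import Defs.
From mathcomp Require Import all_boot.
From mathcomp Require Import zify.
Set Implicit Arguments. Unset Strict Implicit. Unset Printing Implicit Defensive.


Lemma embed_seq (V : finType) (R : rel V) (x0 : V) k (E : nat -> nat -> bool)
  (p : nat -> nat) (s : seq V) :
  symmetric R ->
  (forall a b, a < k -> b < k -> E a b -> a = p b /\ 0 < b) ->
  uniq s -> size s = k ->
  (forall i, 0 < i < k -> R (nth x0 s i) (nth x0 s (p i))) ->
  contains R (graph_of_edges k E).
Proof.
move=> Rs HE us sz Hs; exists (fun x : 'I_k => nth x0 s x); split.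
  move=> x y /eqP; rewrite nth_uniq ?sz // => /eqP; exact: ord_inj.
move=> x y; rewrite /graph_of_edges => /orP [] He.
  have [-> hy] := HE _ _ (ltn_ord x) (ltn_ord y) He.
  by rewrite Rs; apply: Hs; rewrite hy ltn_ord.
have [-> hx] := HE _ _ (ltn_ord y) (ltn_ord x) He.
by apply: Hs; rewrite hx ltn_ord.
Qed.

Lemma greedy (V : finType) (R : rel V) (x0 : V) k (p : nat -> nat) :
  symmetric R -> irreflexive R ->
  (forall v, k.-1 <= #|[set u | R v u]|) ->
  (forall i, 0 < i -> p i < i) ->
  forall j, j <= k -> exists s : seq V, [/\ uniq s, size s = j &
    forall i, 0 < i < j -> R (nth x0 s i) (nth x0 s (p i))].
Proof.
move=> Rs Ri Hd Hp; elim=> [|j IH] hj.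
  by exists [::]; split => // i; lia.
case: j IH hj => [|j] IH hj.
  by exists [:: x0]; split => // i; lia.
have [s [us ss Hs]] := IH (ltnW hj).
set y := nth x0 s (p j.+1).
have yin : y \in s by apply: mem_nth; rewrite ss; apply: Hp.
have : ~~ ([set u | R y u] \subset [set u in s] :\ y).
  apply/negP => /subset_leq_card H.
  have := cardsD1 y [set u in s]; rewrite inE yin cardsE (card_uniqP us) ss.
  have := Hd y; lia.
case/subsetPn => z; rewrite !inE => Ryz; rewrite negb_and negbK => Hz.
have zs : z \notin s.
  case/orP: Hz => // /eqP zy; by rewrite zy Ri in Ryz.
exists (rcons s z); split.
- by rewrite rcons_uniq zs.
- by rewrite size_rcons ss.
move=> i hi; rewrite !nth_rcons ss.
have hpi : p i < i by apply: Hp; lia.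
case: (ltnP i j.+1) => hij.
  rewrite (ltn_trans hpi hij); apply: Hs; lia.
have -> : i = j.+1 by lia.
by rewrite eqxx (Hp j.+1 isT) Rs.
Qed.


Definition p1 m b := if b == m - 1 then m - 3 else if b == m - 2 then m - 4 else 0.
Definition p2 m b := if m - 2 <= b then m - 3 else 0.
Definition pT n b := if b == n - 1 then n - 2 else 0.

Lemma contains_T1 (V : finType) (R : rel V) (x0 : V) m (s : seq V) :
  5 <= m -> symmetric R -> uniq s -> size s = m ->
  (forall i, 0 < i < m -> R (nth x0 s i) (nth x0 s (p1 m i))) ->
  contains R (T1 m).
Proof.
move=> hm Rs us ss Hs; rewrite /T1; apply: (@embed_seq _ _ x0 _ _ (p1 m) s Rs) => //.
move=> a b ha hb /= /or3P [] /andP [/eqP -> H]; rewrite /p1.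
- by split; [case: eqP => ?; [lia|]; case: eqP => ?; lia | lia].
- by move/eqP: H => ->; split; [case: eqP => ?; [lia|]; case: eqP => ?; lia | lia].
- by move/eqP: H => ->; split; [case: eqP => ?; lia | lia].
Qed.

Lemma contains_T2 (V : finType) (R : rel V) (x0 : V) m (s : seq V) :
  5 <= m -> symmetric R -> uniq s -> size s = m ->
  (forall i, 0 < i < m -> R (nth x0 s i) (nth x0 s (p2 m i))) ->
  contains R (T2 m).
Proof.
move=> hm Rs us ss Hs; rewrite /T2; apply: (@embed_seq _ _ x0 _ _ (p2 m) s Rs) => //.
move=> a b ha hb /= /or3P [] /andP [/eqP -> H]; rewrite /p2.
- by split; [case: leqP => ?; lia | lia].
- by move/eqP: H => ->; split; [case: leqP => ?; lia | lia].
- by move/eqP: H => ->; split; [case: leqP => ?; lia | lia].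
Qed.

Lemma contains_Tp (V : finType) (R : rel V) (x0 : V) n (s : seq V) :
  4 <= n -> symmetric R -> uniq s -> size s = n ->
  (forall i, 0 < i < n -> R (nth x0 s i) (nth x0 s (pT n i))) ->
  contains R (Tprime n).
Proof.
move=> hn Rs us ss Hs; rewrite /Tprime; apply: (@embed_seq _ _ x0 _ _ (pT n) s Rs) => //.
move=> a b ha hb /= /orP [] /andP [/eqP -> H]; rewrite /pT.
- by split; [case: eqP => ?; lia | lia].
- by move/eqP: H => ->; split; [case: eqP => ?; lia | lia].
Qed.

Lemma tree_conn k (E : nat -> nat -> bool) (p : nat -> nat) (V : finType)
  (R : rel V) (f : 'I_k -> V) (c : V -> nat) :
  (forall i, 0 < i < k -> p i < i /\ E (p i) i) ->
  (forall x y, graph_of_edges k E x y -> R (f x) (f y)) ->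
  (forall x y, R x y -> c x = c y) ->
  forall (z i : 'I_k), nat_of_ord z = 0 -> c (f i) = c (f z).
Proof.
move=> Hp Hf Hc z i hz.
have : forall t, forall i : 'I_k, nat_of_ord i <= t -> c (f i) = c (f z).
  elim=> [|t IH] i0 hi.
    have -> : i0 = z by apply: ord_inj; lia.
    by [].
  case: (ltnP i0 t.+1) => hit; first by apply: IH; lia.
  have hi0 : 0 < i0 < k by have := ltn_ord i0; lia.
  have [hpi hE] := Hp i0 hi0.
  have hpk : p i0 < k by have := ltn_ord i0; lia.
  rewrite -(IH (Ordinal hpk)) /=; last lia.
  apply/esym/Hc/Hf; by rewrite /graph_of_edges /= hE.
by apply; apply: leqnn.
Qed.


Lemma ramsey_mono (V1 V2 : finType) (G1 : rel V1) (G2 : rel V2) N N' :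
  N <= N' -> ramsey_prop G1 G2 N -> ramsey_prop G1 G2 N'.
Proof.
move=> hN HR G' [Gs Gi].
pose w := widen_ord hN.
have winj : injective w by move=> x y /(congr1 val) /= /ord_inj.
pose G x y := G' (w x) (w y).
have Gsi : simple_graph G by split; [move=> x y; apply: Gs | move=> x; apply: Gi].
case: (HR G Gsi) => [[f [fi fe]] | [f [fi fe]]]; [left | right];
  exists (w \o f); split; try exact: inj_comp.
  by move=> x y /fe.
move=> x y /fe; rewrite /compl_graph /G /= (inj_eq winj) => //.
Qed.

Section Lower.
Variables (m n : nat).
Hypotheses (hm : 5 <= m) (hn : 4 <= n) (hd : (m - 1) %| (n - 3)).
Let q := m - 1.
Let N := m + n - 4.
Definition K : rel 'I_(m + n - 4) := fun x y => (x != y) && (x %/ (m - 1) == y %/ (m - 1)).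

Lemma K_simple : simple_graph K.
Proof.
split; first by move=> x y; rewrite /K eq_sym; congr (_ && _); rewrite eq_sym.
by move=> x; rewrite /K eqxx.
Qed.


Lemma no_tree_K (E : nat -> nat -> bool) (p : nat -> nat) :
  (forall i, 0 < i < m -> p i < i /\ E (p i) i) ->
  ~ contains K (graph_of_edges m E).
Proof.
move=> Hp [f [fi fe]].
have m0 : 0 < m by lia.
pose z := Ordinal m0.
have Hc : forall x y, K x y -> (x : nat) %/ (m-1) = (y : nat) %/ (m-1).
  by move=> x y /andP [_ /eqP].
have hb i := @tree_conn _ _ _ _ _ _ (fun v : 'I_(m+n-4) => (v : nat) %/ (m-1)) Hp fe Hc z i (erefl 0).
pose s := [seq (f i : nat) %% (m-1) | i <- enum 'I_m].
have us : uniq s.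
  rewrite map_inj_in_uniq ?enum_uniq // => i j _ _ hij.
  apply: fi; apply: ord_inj.
  by rewrite (divn_eq (f i) (m-1)) (divn_eq (f j) (m-1)) hij (hb i) (hb j).
have := uniq_leq_size us (s2 := iota 0 (m-1)).
rewrite size_iota size_map size_enum_ord.
have : m <= m - 1 -> False by lia.
move=> H1 H2; apply: H1; apply: H2 => x /mapP [i _ ->].
by rewrite mem_iota add0n ltn_pmod //; lia.
Qed.

Ltac solve3 k := apply/or3P; constructor k; apply/andP; split; apply/eqP; lia.

Lemma no_T1 : ~ contains K (T1 m).
Proof.
rewrite /T1; apply: (no_tree_K (p := p1 m)) => i hi /=; rewrite /p1.
case: (i =P m - 1) => h1.
  split; first lia. apply/or3P; constructor 3; apply/andP; split; apply/eqP; lia.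
case: (i =P m - 2) => h2.
  split; first lia. apply/or3P; constructor 2; apply/andP; split; apply/eqP; lia.
split; first lia. apply/or3P; constructor 1; apply/andP; split; first by []. lia.
Qed.

Lemma no_T2 : ~ contains K (T2 m).
Proof.
rewrite /T2; apply: (no_tree_K (p := p2 m)) => i hi /=; rewrite /p2.
case: (leqP (m - 2) i) => h.
  case: (i =P m - 1) => h1.
    split; first lia. apply/or3P; constructor 3; apply/andP; split; apply/eqP; lia.
  split; first lia. apply/or3P; constructor 2; apply/andP; split; apply/eqP; lia.
split; first lia. apply/or3P; constructor 1; apply/andP; split; first by []. lia.
Qed.

Lemma no_Tp : ~ contains (compl_graph K) (Tprime n).
Proof.
move=> [f [fi fe]].
have n0 : 0 < n by lia.
pose z := Ordinal n0.
pose g i := (f (insubd z i) : nat).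
pose b := (f z : nat) %/ (m-1).
have Hdiff : forall i, 0 < i <= n - 2 -> g i %/ (m-1) != b.
  move=> i hi.
  have hin : i < n by lia.
  have := fe z (insubd z i); rewrite /Tprime /graph_of_edges /= val_insubd hin /=.
  have -> : i <= n - 2 by lia.
  have -> : 0 < i by lia.
  move=> /(_ isT) /andP [_]; rewrite /K negb_and negbK.
  case/orP => [/eqP h|]; last by rewrite eq_sym.
  have : z = insubd z i by apply: fi.
  move/(congr1 (@nat_of_ord _)); rewrite val_insubd hin /=; lia.
pose s := [seq g i | i <- iota 1 (n-2)] ++ [seq b * (m-1) + j | j <- iota 0 (m-1)].
have q0 : 0 < m - 1 by lia.
have hbj : forall j, j < m - 1 -> (b * (m-1) + j) %/ (m-1) = b.
  by move=> j hj; rewrite divnMDl // divn_small // addn0.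
have us : uniq s.
  rewrite cat_uniq; apply/and3P; split.
  - rewrite map_inj_in_uniq ?iota_uniq // => i j; rewrite !mem_iota => hi hj.
    move/ord_inj/fi/(congr1 (@nat_of_ord _)); rewrite !val_insubd.
    have -> : i < n by lia. by have -> : j < n by lia.
  - apply/hasPn => x /mapP [j]; rewrite mem_iota => hj ->.
    apply/negP => /mapP [i]; rewrite mem_iota => hi /(congr1 (fun v => v %/ (m-1))).
    rewrite hbj; last lia.
    move=> h; have := Hdiff i; rewrite -h eqxx; lia.
  - rewrite map_inj_in_uniq ?iota_uniq // => i j _ _; lia.
have := uniq_leq_size us (s2 := iota 0 (m + n - 4)).
rewrite size_iota size_cat !size_map !size_iota.
have : n - 2 + (m - 1) <= m + n - 4 -> False by lia.
move=> H1 H2; apply: H1; apply: H2 => x; rewrite mem_cat => /orP [] /mapP [i].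
  by move=> _ ->; rewrite mem_iota /g ltn_ord.
rewrite mem_iota => hi ->; rewrite mem_iota add0n.
have [k hk] := dvdnP hd.
have hfz : (f z : nat) < (k + 1) * (m - 1) by have := ltn_ord (f z); lia.
have hb : b < k + 1 by rewrite /b ltn_divLR.
have : b * (m-1) + i < (b + 1) * (m - 1) by lia.
have : (b + 1) * (m - 1) <= (k + 1) * (m - 1) by apply: leq_mul => //; lia.
lia.
Qed.

Lemma lower_bound : ~ ramsey_prop (T1 m) (Tprime n) (m + n - 4) /\
                    ~ ramsey_prop (T2 m) (Tprime n) (m + n - 4).
Proof.
split=> HR; case: (HR K K_simple); by [apply: no_T1 | apply: no_T2 | apply: no_Tp].
Qed.
End Lower.


Section Upper.
Variables (m n : nat).
Hypotheses (hm : 5 <= m) (hn : 7 <= n).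
Variable G : rel 'I_(m + n - 3).
Hypothesis (Gs : simple_graph G).
Let H := compl_graph G.

Lemma H_sym : symmetric H.
Proof. by move=> x y; rewrite /H /compl_graph eq_sym (proj1 Gs). Qed.
Lemma H_irr : irreflexive H.
Proof. by move=> x; rewrite /H /compl_graph eqxx. Qed.

Lemma N0 : 0 < m + n - 3. Proof. lia. Qed.
Let x0 : 'I_(m + n - 3) := Ordinal N0.

Lemma case_lowdeg : (forall v, #|[set u | H v u]| <= n - 3) ->
  contains G (T1 m) /\ contains G (T2 m).
Proof.
move=> hd.
have dG : forall v, m.-1 <= #|[set u | G v u]|.
  move=> v.
  have sub : [set: 'I_(m+n-3)] \subset ([set u | G v u] :|: [set u | H v u]) :|: [set v].
    apply/subsetP => u _; rewrite !inE /H /compl_graph.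
    by case: (G v u); case: (u =P v) => [->|/eqP]; rewrite ?eqxx ?orbT //= eq_sym => ->.
  have e0 : m + n - 3 <= #|[set u | G v u] :|: [set u | H v u] :|: [set v]|.
    by have := subset_leq_card sub; rewrite cardsT card_ord.
  have e2 : #|[set u | G v u] :|: [set u | H v u] :|: [set v]| <=
     #|[set u | G v u] :|: [set u | H v u]| + #|[set v]| := leq_of_leqif (leq_card_setU _ _).
  have e1 : #|[set u | G v u] :|: [set u | H v u]| <=
     #|[set u | G v u]| + #|[set u | H v u]| := leq_of_leqif (leq_card_setU _ _).
  rewrite cards1 in e2.
  have := hd v. lia.
have [Gsym Girr] := Gs.
split.
- have [s [us ss Hs]] := @greedy _ G x0 m (p1 m) Gsym Girr dG
    (ltac:(move=> i hi; rewrite /p1; case: eqP => ?; [lia|]; case: eqP => ?; lia)) m (leqnn m).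
  exact: (contains_T1 (x0 := x0) hm Gsym us ss Hs).
- have [s [us ss Hs]] := @greedy _ G x0 m (p2 m) Gsym Girr dG
    (ltac:(move=> i hi; rewrite /p2; case: (leqP (m - 2) i) => ?; lia)) m (leqnn m).
  exact: (contains_T2 (x0 := x0) hm Gsym us ss Hs).
Qed.

Lemma case_highdeg v : n - 2 <= #|[set u | H v u]| ->
  (contains G (T1 m) /\ contains G (T2 m)) \/ contains H (Tprime n).
Proof.
move=> hv.
have [Gsym Girr] := Gs.
set S := [set u | H v u].
pose a := take (n - 2) (enum S).
have ua : uniq a by rewrite take_uniq // enum_uniq.
have sa : size a = n - 2 by rewrite size_takel // -cardE.
have Ha : forall x, x \in a -> H v x.
  by move=> x /mem_take; rewrite mem_enum inE.
have va : v \notin a by apply/negP => /Ha; rewrite H_irr.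
case: (boolP [exists u, exists w, [&& u \in a, w \notin a, w != v & H u w]]).
  case/existsP => u /existsP [w /and4P [ua' wa wv Huw]].
  right.
  pose l := rem u a ++ [:: u; w].
  have sr : size (rem u a) = n - 3 by rewrite size_rem // sa; lia.
  apply: (@contains_Tp _ H x0 n (v :: l)) => //.
  - lia.
  - exact: H_sym.
  - rewrite /= cat_uniq rem_uniq //= !mem_cat !inE negb_or.
    apply/and4P; split.
    + rewrite negb_or; apply/and3P; split.
      * by apply/negP => /mem_rem; apply/negP.
      * by apply/eqP => hvu; move: ua'; rewrite -hvu (negbTE va).
      * by rewrite eq_sym.
    + rewrite !negb_or /= andbT; apply/andP; split.
      * by rewrite mem_rem_uniq // inE eqxx.
      * by apply/negP => /mem_rem; apply/negP.
    + by apply/eqP => huw; move: wa; rewrite -huw ua'.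
    + done.
  - by rewrite /= size_cat sr /=; lia.
  move=> [|i] hi //=.
  rewrite /pT /l nth_cat sr.
  case: (i.+1 =P n - 1) => hi1.
    have -> : i < n - 3 = false by lia.
    have -> : i - (n - 3) = 1 by lia.
    have -> : n - 2 = (n - 3).+1 by lia.
    by rewrite /= nth_cat sr ltnn subnn /= H_sym.
  rewrite /= H_sym.
  case: ltnP => hi3.
    by apply: Ha; apply: mem_rem (mem_nth _ _); rewrite sr.
  have -> : i - (n - 3) = 0 by lia.
  by apply: Ha.
rewrite negb_exists => /forallP Hno.
left.
have GaB : forall x y, x \in a -> y \notin a -> y != v -> G x y.
  move=> x y xa ya yv.
  have := Hno x; rewrite negb_exists => /forallP /(_ y).
  rewrite xa ya yv /= /H /compl_graph negb_and negbK.
  rewrite negbK; case/orP => // /eqP hxy; by move: ya; rewrite -hxy xa.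
set B := [set w | (w \notin a) && (w != v)].
have cB : #|B| = m - 2.
  have := cardsC B; rewrite card_ord.
  have -> : ~: B = [set w in v :: a].
    apply/setP => w; rewrite !inE negb_and !negbK orbC.
    by case: (w =P v).
  have hc : #|v :: a| = size (v :: a) by apply/card_uniqP; rewrite /= va ua.
  have hc2 : #|[set w in v :: a]| = n - 1 by rewrite cardsE hc /= sa; lia.
  rewrite hc2; lia.
pose bs := take (m - 3) (enum B).
have ubs : uniq bs by rewrite take_uniq // enum_uniq.
have sbs : size bs = m - 3 by rewrite size_takel // -cardE cB; lia.
have Hbs : forall y, y \in bs -> (y \notin a) && (y != v).
  by move=> y /mem_take; rewrite mem_enum inE.
have n3 : 3 <= size a by rewrite sa; lia.
have [a0 [a1 [a2 [r Ea]]]] : exists a0 a1 a2 r, a = a0 :: a1 :: a2 :: r.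
  move: n3; case: (a) => [|a0 [|a1 [|a2 r]]] //= _; by exists a0, a1, a2, r.
pose s := a0 :: (bs ++ [:: a1; a2]).
have us : uniq s.
  rewrite /s /= cat_uniq ubs /= !mem_cat !inE.
  move: ua; rewrite Ea /= !inE !negb_or => /and4P [/and3P [h01 h02 _] /andP [h12 _] _ _].
  have nb : forall x, x \in bs -> (x == a0) || (x == a1) || (x == a2) -> False.
    by move=> x /Hbs; rewrite Ea !inE; case: (x == a0); case: (x == a1); case: (x == a2).
  have b0 : a0 \notin bs by apply/negP => h; apply: (nb a0 h); rewrite eqxx.
  have b1 : a1 \notin bs by apply/negP => h; apply: (nb a1 h); rewrite eqxx orbT.
  have b2 : a2 \notin bs by apply/negP => h; apply: (nb a2 h); rewrite eqxx !orbT.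
  by rewrite b0 b1 b2 h01 h02 h12.
have ss : size s = m by rewrite /s /= size_cat sbs /=; lia.
have nthB : forall j, 0 < j <= m - 3 -> (nth x0 s j \notin a) && (nth x0 s j != v).
  move=> [|j] hj //=; rewrite nth_cat sbs.
  have -> : j < m - 3 by lia.
  by apply: Hbs; apply: mem_nth; rewrite sbs; lia.
have n1 : nth x0 s (m - 2) = a1.
  have -> : m - 2 = (m - 3).+1 by lia.
  by rewrite /= nth_cat sbs ltnn subnn.
have n2 : nth x0 s (m - 1) = a2.
  have -> : m - 1 = (m - 3).+2 by lia.
  by rewrite /= nth_cat sbs ltnNge leqnSn /= subSn // subnn.
have GB : forall x j, x \in a -> 0 < j <= m - 3 -> G x (nth x0 s j).
  move=> x j xa hj; have /andP [h1 h2] := nthB j hj; exact: GaB.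
split.
- apply: (@contains_T1 _ G x0 m s hm Gsym us ss) => i hi.
  rewrite /p1; case: (i =P m - 1) => h1.
    by rewrite h1 n2; apply: GB; rewrite ?Ea ?inE ?eqxx ?orbT //; lia.
  case: (i =P m - 2) => h2.
    by rewrite h2 n1; apply: GB; rewrite ?Ea ?inE ?eqxx ?orbT //; lia.
  by rewrite Gsym; apply: GB; rewrite ?Ea ?inE ?eqxx //; lia.
- apply: (@contains_T2 _ G x0 m s hm Gsym us ss) => i hi.
  rewrite /p2; case: (leqP (m - 2) i) => h.
    case: (i =P m - 1) => h1.
      by rewrite h1 n2; apply: GB; rewrite ?Ea ?inE ?eqxx ?orbT //; lia.
    have -> : i = m - 2 by lia.
    by rewrite n1; apply: GB; rewrite ?Ea ?inE ?eqxx ?orbT //; lia.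
  by rewrite Gsym; apply: GB; rewrite ?Ea ?inE ?eqxx //; lia.
Qed.

End Upper.

Theorem theorem5p2 (m n : nat) :
  5 <= m -> 4 <= n -> (m - 1) %| (n - 3) ->
  is_ramsey_number (T1 m) (Tprime n) (m + n - 3) /\
  is_ramsey_number (T2 m) (Tprime n) (m + n - 3).
Proof.
move=> hm hn hd.
have hn7 : 7 <= n.
  have := dvdn_leq (ltac:(lia) : 0 < n - 3) hd; lia.
have up : forall G : rel 'I_(m + n - 3), simple_graph G ->
    (contains G (T1 m) /\ contains G (T2 m)) \/ contains (compl_graph G) (Tprime n).
  move=> G Gs.
  case: (boolP [exists v, n - 2 <= #|[set u | compl_graph G v u]|]).
    by case/existsP => v hv; apply: (case_highdeg hm hn7 Gs hv).
  rewrite negb_exists => /forallP hv; left.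
  apply: (case_lowdeg hm hn7 Gs) => v; have := hv v; rewrite -ltnNge; lia.
have [lb1 lb2] := lower_bound hm hn hd.
split; split.
- lia.
- by move=> G Gs; case: (up G Gs) => [[]|]; [left | right].
- move=> N N0 hN HR; apply: lb1; apply: (ramsey_mono _ HR); lia.
- lia.
- by move=> G Gs; case: (up G Gs) => [[]|]; [left | right].
- move=> N N0 hN HR; apply: lb2; apply: (ramsey_mono _ HR); lia.
Qed.
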